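(* For every $m\ge1$, $\mathrm{PBTD}(\mathrm{QR}^1_{\infty,m})=2$. If $z\ge2$, then $\mathrm{PBTD}(\mathrm{QR}^z_{\infty,m})\ge2$.
   Context: Fix a countably infinite set $X$ of variables and an alphabet $\Sigma$ (finite or countably infinite, disjoint from $X$), $z=|\Sigma|$. A pattern is a nonempty finite string over $X\cup\Sigma$. A substitution is a morphism $h:(X\cup\Sigma)^*\to\Sigma^*$ fixing letters; $L(\pi)$ (erasing pattern language) is the set of all $h(\pi)$; patterns with equal languages are identified. A pattern is $m$-quasi-regular if every variable occurring in it occurs exactly $m$ times (patterns without variables are included); $\mathrm{QR}^z_{\infty,m}$ is the class of $m$-quasi-regular patterns over an alphabet of size $z$. A labelled example is $(w,\pm)$ with $w\in\Sigma^*$; a teaching set for $\pi$ w.r.t. a class $\Pi$ is a set $T$ of labelled examples consistent with $\pi$ such that every $\tau\in\Pi$ consistent with $T$ has $L(\tau)=L(\pi)$. For a strict partial order $\prec$ on $\Pi$, a teaching set for $\pi$ w.r.t. $(\Pi,\prec)$ is a teaching set for $\pi$ w.r.t. $\Pi\setminus\{\pi':\pi'\prec\pi\}$; $\mathrm{PBTD}(\Pi,\prec)$ is the supremum over $\pi\in\Pi$ of the minimum size of such sets, and $\mathrm{PBTD}(\Pi)=\inf_\prec\mathrm{PBTD}(\Pi,\prec)$. *)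

(* Defs.v *)
From mathcomp Require Import all_boot.
Set Implicit Arguments. Unset Strict Implicit. Unset Printing Implicit Defensive.

Section Patterns.
Variable Sigma : countType.

(* Variables X = nat; a pattern symbol is a variable (inl x) or a letter (inr a). *)
Definition symbol := (nat + Sigma)%type.
Definition pattern := seq symbol.

Definition subst (h : nat -> seq Sigma) (p : pattern) : seq Sigma :=
  flatten (map (fun s => match s with inl x => h x | inr a => [:: a] end) p).

Definition lang (p : pattern) (w : seq Sigma) : Prop := exists h, subst h p = w.

Definition lang_eq (p q : pattern) : Prop := forall w, lang p w <-> lang q w.

Definition quasi_regular (m : nat) (p : pattern) : Prop :=
  p <> [::] /\
  forall x : nat, count (pred1 (inl x : symbol)) p = 0 \/
                  count (pred1 (inl x : symbol)) p = m.

(* Strict partial order on the class C of patterns, where patterns with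
   equal languages are identified: the relation is compatible with
   language equality, irreflexive and transitive on C. *)
Definition strict_po (C : pattern -> Prop) (prec : pattern -> pattern -> Prop) :=
  (forall p p' q q', C p -> C p' -> C q -> C q' ->
      lang_eq p p' -> lang_eq q q' -> prec p q -> prec p' q') /\
  (forall p, C p -> ~ prec p p) /\
  (forall p q r, C p -> C q -> C r -> prec p q -> prec q r -> prec p r).

(* Labelled examples (w, true) = (w,+), (w, false) = (w,-). *)
Definition consistent (T : seq (seq Sigma * bool)) (p : pattern) : Prop :=
  forall w b, (w, b) \in T -> (lang p w <-> b = true).

Definition teaching_set (C : pattern -> Prop) (prec : pattern -> pattern -> Prop)
    (p : pattern) (T : seq (seq Sigma * bool)) : Prop :=
  consistent T p /\
  forall q, C q -> ~ prec q p -> consistent T q -> lang_eq q p.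

Definition PBTD_le (C : pattern -> Prop) (prec : pattern -> pattern -> Prop) (k : nat) :=
  forall p, C p -> exists T, size T <= k /\ teaching_set C prec p T.

Definition PBTD_ge (C : pattern -> Prop) (k : nat) :=
  forall prec, strict_po C prec -> ~ PBTD_le C prec k.-1.

(* PBTD(C) = k  (for k >= 1); the infimum over orders of a N u {oo}-valued
   quantity is attained, so this is: some order achieves <= k, none achieves <= k-1. *)
Definition PBTD_eq (C : pattern -> Prop) (k : nat) :=
  (exists prec, strict_po C prec /\ PBTD_le C prec k) /\ PBTD_ge C k.

End Patterns.

(* The class QR^z_{oo,m} over alphabet Sigma (z = #Sigma). *)
Definition QR (Sigma : countType) (m : nat) : pattern Sigma -> Prop :=
  @quasi_regular Sigma m.
Arguments QR : clear implicits.

(* Main.v *)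
Require Import Defs.
From mathcomp Require Import all_boot.
From mathcomp Require Import zify.
From Stdlib Require Import Classical.
Set Implicit Arguments. Unset Strict Implicit. Unset Printing Implicit Defensive.

Section Aux.
Variable Sigma : countType.
Implicit Types (p q : pattern Sigma) (h : nat -> seq Sigma) (w u v : seq Sigma).

Definition h0 : nat -> seq Sigma := fun _ => [::].
Definition upd h y u : nat -> seq Sigma := fun z => if z == y then u else h z.
Definition isvar (s : symbol Sigma) : bool := if s is inl _ then true else false.

Lemma subst_cons h s p : subst h (s :: p) =
  (match s with inl x => h x | inr a => [:: a] end) ++ subst h p.
Proof. by []. Qed.

Lemma size_subst_upd h y u q :
  size (subst (upd h y (h y ++ u)) q) = size (subst h q) + count (pred1 (inl y)) q * size u.
Proof.
elim: q => [|s q IH] //=; rewrite !subst_cons !size_cat IH.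
case: s => [x|a] /=; last by rewrite add0n addnA.
rewrite /upd; case: (x =P y) => [->|ne]; rewrite ?eqxx ?size_cat /=.
  by rewrite mulSn; lia.
have -> : (inl x == inl y :> symbol Sigma) = false by apply/eqP => -[].
by rewrite add0n addnA.
Qed.

Lemma subst_novar h p : ~~ has isvar p -> subst h p = subst h0 p.
Proof.
elim: p => [|s p IH] //=; rewrite negb_or => /andP[hs hp].
rewrite !subst_cons IH //; by case: s hs.
Qed.

Lemma lang_novar p w : ~~ has isvar p -> (lang p w <-> w = subst h0 p).
Proof.
move=> nv; split => [[h <-]|->]; first exact: subst_novar.
by exists h0.
Qed.

Lemma var_count m p : quasi_regular m p -> has isvar p ->
  exists y, count (pred1 (inl y)) p = m.
Proof.
move=> [_ Hq] /hasP [[y|a] yin] //= _; exists y.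
case: (Hq y) => // H0.
have : 0 < count (pred1 (inl y)) p by rewrite -has_count; apply/hasP; exists (inl y) => //=.
by rewrite H0.
Qed.

Definition vsz h (s : symbol Sigma) : nat := if s is inl x then size (h x) else 0.
Definition gsz (s : symbol Sigma) : nat := if s is inl _ then 0 else 1.

Lemma size_subst_sum h p : size (subst h p) = \sum_(s <- p) gsz s + \sum_(s <- p) vsz h s.
Proof.
elim: p => [|s p IH]; first by rewrite !big_nil.
by rewrite subst_cons size_cat IH !big_cons; case: s => [x|a] /=; lia.
Qed.

Lemma size_subst_mod m p h : quasi_regular m p ->
  exists t, size (subst h p) = size (subst h0 p) + m * t.
Proof.
move=> [_ Hq]; rewrite !size_subst_sum.
have -> : \sum_(s <- p) vsz h0 s = 0 by rewrite big1 // => -[x|a].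
exists (\sum_(s <- undup p) vsz h s); rewrite addn0; congr (_ + _).
rewrite -big_undup_iterop_count big_distrr /= big_seq [RHS]big_seq.
apply: eq_bigr => -[x|a] Hin; rewrite Monoid.iteropE iter_addn_0 /=; last by rewrite muln0.
rewrite mem_undup in Hin.
case: (Hq x) => H; last by rewrite H mulnC.
have : 0 < count (pred1 (inl x)) p by rewrite -has_count; apply/hasP; exists (inl x) => //=.
by rewrite H.
Qed.

Lemma unary_eq (a : Sigma) : (forall b : Sigma, b = a) -> forall u v, size u = size v -> u = v.
Proof.
move=> Ha; elim=> [|x u IH] [|y v] //= [] /IH ->; by rewrite (Ha x) (Ha y).
Qed.

Definition cst w : pattern Sigma := map inr w.

Lemma lang_cst w u : lang (cst w) u <-> u = w.
Proof.
have E : forall h, subst h (cst w) = w by move=> h; elim: w => //= a w IH; rewrite subst_cons IH.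
by split => [[h <-]|->]; [rewrite E | exists h0; rewrite E].
Qed.

Lemma qr_cst m w : w != [::] -> quasi_regular m (cst w).
Proof.
move=> nw; split; first by case: w nw.
by move=> x; left; elim: w {nw} => //= a w IH; rewrite IH.
Qed.

End Aux.

Section UB.
Variable Sigma : countType.
Variable a : Sigma.
Hypothesis Ha : forall b : Sigma, b = a.
Variable m : nat.
Hypothesis m1 : 1 <= m.

Definition precL (q p : pattern Sigma) : Prop :=
  (forall w, lang p w -> lang q w) /\ ~ (forall w, lang q w -> lang p w).

Lemma precL_po : strict_po (QR Sigma m) precL.
Proof.
split; [|split].
- move=> p p' q q' _ _ _ _ Ep Eq [H1 H2]; split.
    by move=> w /Eq /H1 /Ep.
  by move=> H; apply: H2 => w /Ep /H /Eq.
- by move=> p _ [_ H]; apply: H.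
- move=> p q r _ _ _ [H1 H2] [H3 H4]; split; first by move=> w /H3 /H1.
  by move=> H; apply: H4 => w /H1 /H.
Qed.

Lemma mem2 (x y z : seq Sigma * bool) : z \in [:: x; y] -> z = x \/ z = y.
Proof. by rewrite !inE => /orP[/eqP|/eqP]; auto. Qed.

Lemma precL_le : PBTD_le (QR Sigma m) precL 2.
Proof.
move=> p Cp.
set w0 := subst (@h0 Sigma) p.
have [hv|nv] := boolP (has (@isvar Sigma) p).
- have [x Hx] := var_count Cp hv.
  set w1 := subst (upd (@h0 Sigma) x (@h0 Sigma x ++ [:: a])) p.
  have sw1 : size w1 = size w0 + m by rewrite /w1 size_subst_upd Hx muln1.
  exists [:: (w0, true); (w1, true)]; split => //; split.
    move=> w b /mem2 [[-> ->]|[-> ->]]; split => // _; [by exists (@h0 Sigma)|].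
    by exists (upd (@h0 Sigma) x (@h0 Sigma x ++ [:: a])).
  move=> q Cq Np Cons.
  have [g Hg] : lang q w0 by apply: (proj2 (Cons w0 true _)) => //; rewrite !inE eqxx.
  have Lw1 : lang q w1 by apply: (proj2 (Cons w1 true _)) => //; rewrite !inE eqxx orbT.
  have hq : has (@isvar Sigma) q.
    apply/negPn/negP => nq.
    move: (Lw1) => /(lang_novar _ nq) E1.
    have E0 : w0 = subst (@h0 Sigma) q by apply/(lang_novar _ nq); exists g.
    by move: sw1; rewrite E1 -E0; lia.
  have [y Hy] := var_count Cq hq.
  have Sub : forall w, lang p w -> lang q w.
    move=> w [h Hh]; have [t Ht] := size_subst_mod h Cp.
    exists (upd g y (g y ++ nseq t a)); apply: (unary_eq Ha).
    by rewrite size_subst_upd Hy size_nseq Hg -Hh Ht.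
  move=> w; split; last exact: Sub.
  apply: NNPP => Hn; apply: Np; split => // H; apply: Hn; exact: H.
- exists [:: (w0, true); (w0 ++ nseq m a, false)]; split => //.
  have Lp : forall w, lang p w <-> w = w0 by move=> w; exact: lang_novar.
  split.
    move=> w b /mem2 [[-> ->]|[-> ->]]; rewrite Lp //; split => // E.
    by move/(f_equal size): E; rewrite size_cat size_nseq; lia.
  move=> q Cq _ Cons.
  have [g Hg] : lang q w0 by apply: (proj2 (Cons w0 true _)) => //; rewrite !inE eqxx.
  have nq : ~~ has (@isvar Sigma) q.
    apply/negP => hq; have [y Hy] := var_count Cq hq.
    have L : lang q (w0 ++ nseq m a).
      exists (upd g y (g y ++ [:: a])); apply: (unary_eq Ha).
      by rewrite size_subst_upd Hy Hg size_cat size_nseq muln1.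
    have Hm : (w0 ++ nseq m a, false) \in [:: (w0, true); (w0 ++ nseq m a, false)].
      by rewrite !inE eqxx orbT.
    by have [H _] := Cons _ _ Hm; have := H L.
  have E0 : w0 = subst (@h0 Sigma) q by apply/(lang_novar _ nq); exists g.
  by move=> w; rewrite Lp (lang_novar _ nq) -E0.
Qed.

End UB.

Section LB.
Variable Sigma : countType.
Variable a : Sigma.
Variable m : nat.
Hypothesis m1 : 1 <= m.

Definition Qp : pattern Sigma := inr a :: nseq m (inl 0).
Definition W k : seq Sigma := subst (fun _ => nseq k a) Qp.

Lemma size_nseq_var (h : nat -> seq Sigma) n : size (subst h (nseq n (inl 0 : symbol Sigma))) = n * size (h 0).
Proof. by elim: n => //= n IH; rewrite subst_cons size_cat IH mulSn. Qed.

Lemma size_W k : size (W k) = 1 + m * k.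
Proof. by rewrite /W /Qp subst_cons size_cat size_nseq_var size_nseq. Qed.

Lemma QR_Q : QR Sigma m Qp.
Proof.
split => // x; rewrite /Qp /= count_nseq /=.
case: (x =P 0) => [->|ne]; [right; by rewrite eqxx mul1n | left].
have -> : (inl 0 == inl x :> symbol Sigma) = false by apply/eqP => -[E]; apply: ne.
by rewrite mul0n.
Qed.

Lemma lang_W k : lang Qp (W k). Proof. by exists (fun _ => nseq k a). Qed.

Lemma Q_words_ne (w : seq Sigma) : lang Qp w -> w != [::].
Proof. by move=> [h <-]. Qed.

Lemma Q_not_cst (w : seq Sigma) : ~ lang_eq (cst w) Qp.
Proof.
move=> E.
have E0 : W 0 = w by apply/lang_cst/E/lang_W.
have E1 : W 1 = w by apply/lang_cst/E/lang_W.
by move: (size_W 0) (size_W 1); rewrite E0 E1; lia.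
Qed.

Lemma Q_not_cst' (w : seq Sigma) : ~ lang_eq Qp (cst w).
Proof. by move=> E; apply: (@Q_not_cst w) => u; rewrite E. Qed.

Lemma forced C prec (p q : pattern Sigma) T :
  teaching_set C prec p T -> C q -> consistent T q -> ~ lang_eq q p -> prec q p.
Proof. move=> [_ H] Cq Hc Hne; apply: NNPP => Np; exact: Hne (H q Cq Np Hc). Qed.

Lemma size_le1 (T : seq (seq Sigma * bool)) : size T <= 1 ->
  T = [::] \/ exists w b, T = [:: (w, b)].
Proof. by case: T => [|[w b] [|]] //= _; [left | right; exists w, b]. Qed.

Lemma cons1 (T : seq (seq Sigma * bool)) w b (q : pattern Sigma) :
  T = [:: (w, b)] -> consistent T q <-> (lang q w <-> b = true).
Proof.
move=> ->; split; first by apply; rewrite inE.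
by move=> H w' b'; rewrite inE => /eqP [-> ->].
Qed.

Lemma cst_diff (w u : seq Sigma) : w != [::] -> w <> u -> ~ lang_eq (cst w) (cst u).
Proof. by move=> _ ne E; apply: ne; apply/lang_cst/E/lang_cst. Qed.

Theorem lower : PBTD_ge (QR Sigma m) 2.
Proof.
move=> prec [_ [Irr Tr]] H.
set C := QR Sigma m.
have asym : forall p q, C p -> C q -> prec p q -> prec q p -> False.
  by move=> p q Cp Cq H1 H2; apply: (Irr p Cp); apply: (Tr p q p).
have Cc : forall w, w != [::] -> C (cst w) by move=> w; exact: qr_cst.
have [w0 [Lw0 [nw0 P0]]] : exists w0, lang Qp w0 /\ w0 != [::] /\ prec (cst w0) Qp.
  have [T [ST TS]] := H Qp QR_Q.
  have W0ne : W 0 != [::] by apply: Q_words_ne; exact: lang_W.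
  case: (size_le1 ST) => [ET|[w [b ET]]].
  - exists (W 0); split; first exact: lang_W; split => //.
    apply: (forced TS (Cc _ W0ne)); first by rewrite ET.
    exact: Q_not_cst.
  - have CQ := proj1 TS; move/(cons1 _ ET): CQ => CQ.
    case: b ET CQ => ET CQ.
    + have Lw : lang Qp w by apply/CQ.
      have nw := Q_words_ne Lw.
      exists w; split => //; split => //.
      apply: (forced TS (Cc _ nw)); last exact: Q_not_cst.
      by apply/(cons1 _ ET); split => // _; apply/lang_cst.
    + exists (W 0); split; first exact: lang_W; split => //.
      apply: (forced TS (Cc _ W0ne)); last exact: Q_not_cst.
      apply/(cons1 _ ET); split => // /lang_cst E.
      by have := proj1 CQ; rewrite E => /(_ (lang_W 0)).
have [T [ST TS]] := H (cst w0) (Cc _ nw0).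
case: (size_le1 ST) => [ET|[w [b ET]]].
  apply: (asym _ _ (Cc _ nw0) QR_Q P0).
  by apply: (forced TS QR_Q); [rewrite ET | exact: Q_not_cst'].
have CD := proj1 TS; move/(cons1 _ ET): CD => CD.
case: b ET CD => ET CD.
  have Ew : w = w0 by apply/lang_cst/CD.
  apply: (asym _ _ (Cc _ nw0) QR_Q P0).
  apply: (forced TS QR_Q); last exact: Q_not_cst'.
  by apply/(cons1 _ ET); rewrite Ew; split.
have nww0 : w <> w0 by move=> E; have := proj1 CD; rewrite E => /(_ (proj2 (lang_cst _ _) erefl)).
have Step3 : forall v, lang Qp v -> v <> w -> v <> w0 ->
   prec (cst v) (cst w0) /\
   (forall q, C q -> ~ prec q (cst v) -> consistent [:: (w0, false)] q -> lang_eq q (cst v)).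
  move=> v Lv nvw nvw0.
  have nv := Q_words_ne Lv.
  have Pv : prec (cst v) (cst w0).
    apply: (forced TS (Cc _ nv)); last exact: cst_diff.
    by apply/(cons1 _ ET); split => // /lang_cst E; exfalso; apply: nvw.
  split => //.
  have [T' [ST' TS']] := H (cst v) (Cc _ nv).
  case: (size_le1 ST') => [ET'|[u [b' ET']]].
    exfalso; apply: (asym _ _ (Cc _ nv) (Cc _ nw0) Pv).
    apply: (forced TS' (Cc _ nw0)); [by rewrite ET' | apply: cst_diff => // E; exact: (nvw0 (esym E))].
  have CE := proj1 TS'; move/(cons1 _ ET'): CE => CE.
  case: b' ET' CE => ET' CE.
    have Eu : u = v by apply/lang_cst/CE.
    exfalso.
    have PQ : prec Qp (cst v).
      apply: (forced TS' QR_Q); last exact: Q_not_cst'.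
      by apply/(cons1 _ ET'); rewrite Eu; split.
    apply: (asym _ _ QR_Q (Cc _ nv) PQ).
    exact: (Tr _ _ _ (Cc _ nv) (Cc _ nw0) QR_Q Pv P0).
  have Euw0 : u = w0.
    apply: NNPP => ne; apply: (asym _ _ (Cc _ nv) (Cc _ nw0) Pv).
    apply: (forced TS' (Cc _ nw0)); last by apply: cst_diff => // E; exact: (nvw0 (esym E)).
    by apply/(cons1 _ ET'); split => // /lang_cst E; exfalso; apply: ne.
  move: TS'; rewrite ET' Euw0 => -[_ TS'']; exact: TS''.
pose k1 := size w + size w0 + 1.
have s1 := size_W k1; have s2 := size_W k1.+1.
have n1w : W k1 <> w by move=> E; move: s1; rewrite E /k1; nia.
have n1w0 : W k1 <> w0 by move=> E; move: s1; rewrite E /k1; nia.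
have n2w : W k1.+1 <> w by move=> E; move: s2; rewrite E /k1; nia.
have n2w0 : W k1.+1 <> w0 by move=> E; move: s2; rewrite E /k1; nia.
have n12 : W k1 <> W k1.+1 by move=> E; move: s1 s2; rewrite E; nia.
have [_ T1] := Step3 _ (lang_W k1) n1w n1w0.
have [_ T2] := Step3 _ (lang_W k1.+1) n2w n2w0.
have ne1 : W k1 != [::] by apply: Q_words_ne; exact: lang_W.
have ne2 : W k1.+1 != [::] by apply: Q_words_ne; exact: lang_W.
have P21 : prec (cst (W k1.+1)) (cst (W k1)).
  apply: NNPP => Np; apply: (cst_diff ne2 (nesym n12)).
  apply: T1 (Cc _ ne2) Np _.
  by apply/(cons1 _ (erefl _)); split => // /lang_cst E; exfalso; apply: n2w0.
have P12 : prec (cst (W k1)) (cst (W k1.+1)).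
  apply: NNPP => Np; apply: (cst_diff ne1 n12).
  apply: T2 (Cc _ ne1) Np _.
  by apply/(cons1 _ (erefl _)); split => // /lang_cst E; exfalso; apply: n1w0.
exact: (asym _ _ (Cc _ ne1) (Cc _ ne2) P12 P21).
Qed.

End LB.

Theorem mainTheorem10 :
  forall m : nat, 1 <= m ->
    (forall Sigma : countType, (exists a : Sigma, forall b : Sigma, b = a) ->
       PBTD_eq (QR Sigma m) 2) /\
    (forall Sigma : countType, (exists a b : Sigma, a <> b) ->
       PBTD_ge (QR Sigma m) 2).
Proof.
move=> m m1; split.
- move=> Sigma [a Ha]; split; last exact: (lower a m1).
  exists (@precL Sigma); split; [exact: precL_po | exact: (precL_le Ha m1)].
- move=> Sigma [a [b _]]; exact: (lower a m1).
Qed.
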